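(* Let $h$ be a positive integer and $L$ an $h$-modular lattice with zero. Let $x$ be a map from $\mathrm{J}(K)$ to $L$ with finite range. Then $x\in\mathcal{A}^*$ if and only if $x$ extends to a homomorphism from $\langle K^-,\vee\rangle$ to $\langle L,\wedge\rangle$, where $K^-=K\setminus\{0_K\}$. Furthermore, such an extension is unique.
   Context: $K$ is the lattice consisting of $\varnothing$ (its zero $0_K$), $C=\{c\}$, $A_m=\{a_k:k\geq m\}$, $B_n=\{b_k:k\geq n\}$ ($m,n<\omega$), and $C\cup A_m\cup B_n$ with $|m-n|\leq1$, ordered by inclusion; $a_n,b_n,c$ denote $A_n,B_n,C$, so $\mathrm{J}(K)=\{c\}\cup\{a_n\}\cup\{b_n\}$. $\mathcal{A}$ is the set of antitone maps $x\colon\mathrm{J}(K)\to L$ ($p\leq q\Rightarrow x(p)\geq x(q)$) with finite range. For $x\in\mathcal{A}$, $x(a_\infty)$, $x(b_\infty)$ are the eventual values of the increasing sequences $(x(a_n))$, $(x(b_n))$. The map $x^{(1)}$ is defined by $x^{(1)}(c)=x(c)\vee(x(a_\infty)\wedge x(b_\infty))$, $x^{(1)}(a_0)=x(a_0)$, $x^{(1)}(b_0)=x(b_0)$, $x^{(1)}(a_{n+1})=x(a_{n+1})\vee(x(b_n)\wedge x(c))$, $x^{(1)}(b_{n+1})=x(b_{n+1})\vee(x(a_n)\wedge x(c))$ for $n<\omega$. $\mathcal{A}^*=\{x\in\mathcal{A}:x^{(1)}=x\}$. $L$ is $h$-modular if $u^{(h+1)}=u^{(h)}$ for all $u\in L^3$,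 where $\langle x,y,z\rangle^{(1)}=\langle x\vee(y\wedge z),y\vee(x\wedge z),z\vee(x\wedge y)\rangle$ and $u^{(k+1)}=(u^{(k)})^{(1)}$. *)

(* Defs.v *)
From HB Require Import structures.
From mathcomp Require Import all_boot all_order.
Set Implicit Arguments. Unset Strict Implicit. Unset Printing Implicit Defensive.
Import Order.LTheory.
Local Open Scope order_scope.

(* Points of the lattice K: c, a_k, b_k.  These also index J(K):
   jc ~ C = {c}, ja n ~ A_n = {a_k : k >= n}, jb n ~ B_n = {b_k : k >= n}. *)
Inductive JK := jc | ja of nat | jb of nat.

(* Elements of K (as codes): empty, C, A_m, B_n, C u A_m u B_n. *)
Inductive Kel := K0 | KC | KA of nat | KB of nat | KCAB of nat & nat.

Definition validK (k : Kel) : bool :=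
  match k with KCAB m n => (m <= n.+1)%N && (n <= m.+1)%N | _ => true end.

Definition memK (k : Kel) (p : JK) : bool :=
  match k, p with
  | K0, _ => false
  | KC, jc => true
  | KA m, ja j => (m <= j)%N
  | KB n, jb j => (n <= j)%N
  | KCAB _ _, jc => true
  | KCAB m _, ja j => (m <= j)%N
  | KCAB _ n, jb j => (n <= j)%N
  | _, _ => false
  end.

Definition leK (k1 k2 : Kel) : Prop := forall p, memK k1 p -> memK k2 p.

Definition is_joinK (k1 k2 k3 : Kel) : Prop :=
  [/\ validK k3, leK k1 k3, leK k2 k3 &
      forall k, validK k -> leK k1 k -> leK k2 k -> leK k3 k].

Definition embJ (p : JK) : Kel :=
  match p with jc => KC | ja n => KA n | jb n => KB n end.

Definition leJ (p q : JK) : Prop := leK (embJ p) (embJ q).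

Section Lat.
Context {disp : Order.disp_t} {L : bLatticeType disp}.

Definition tri1 (u : L * L * L) : L * L * L :=
  let: (x, y, z) := u in
  (x `|` (y `&` z), y `|` (x `&` z), z `|` (x `&` y)).

Definition hmodular (h : nat) : Prop :=
  forall u : L * L * L, iter h.+1 tri1 u = iter h tri1 u.

Definition antitoneJ (x : JK -> L) : Prop :=
  forall p q, leJ p q -> x q <= x p.

Definition finite_range (x : JK -> L) : Prop :=
  exists s : seq L, forall p, x p \in s.

Definition eventual_value (u : nat -> L) (v : L) : Prop :=
  exists N, forall n, (N <= n)%N -> u n = v.

(* x^(1), given the eventual values ainf = x(a_oo), binf = x(b_oo). *)
Definition x1 (x : JK -> L) (ainf binf : L) (p : JK) : L :=
  match p with
  | jc => x jc `|` (ainf `&` binf)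
  | ja 0 => x (ja 0)
  | jb 0 => x (jb 0)
  | ja n.+1 => x (ja n.+1) `|` (x (jb n) `&` x jc)
  | jb n.+1 => x (jb n.+1) `|` (x (ja n) `&` x jc)
  end.

Definition inA (x : JK -> L) : Prop := antitoneJ x /\ finite_range x.

Definition inAstar (x : JK -> L) : Prop :=
  inA x /\
  exists ainf binf, eventual_value (fun n => x (ja n)) ainf /\
                    eventual_value (fun n => x (jb n)) binf /\
                    forall p, x1 x ainf binf p = x p.

Definition join_meet_hom (f : Kel -> L) : Prop :=
  forall k1 k2 k3, validK k1 -> validK k2 -> k1 <> K0 -> k2 <> K0 ->
    is_joinK k1 k2 k3 -> f k3 = f k1 `&` f k2.

Definition extending_hom (x : JK -> L) (f : Kel -> L) : Prop :=
  join_meet_hom f /\ forall p, f (embJ p) = x p.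

End Lat.

(* Main.v *)
Require Import Defs.
From mathcomp Require Import all_boot all_order.
From mathcomp Require Import zify.
From Stdlib Require Import Classical.

Import Order.LTheory.

Section Helpers.
Context {disp : Order.disp_t} {L : bLatticeType disp}.
Local Open Scope order_scope.

Lemma count_lt (T : eqType) (a1 a2 : pred T) (s : seq T) (y : T) :
  (forall z, a1 z -> a2 z) -> y \in s -> a2 y -> ~~ a1 y ->
  (count a1 s < count a2 s)%N.
Proof.
move=> sub; elim: s => [//|z s IH]; rewrite inE => /orP [/eqP<- | ys] a2y na1y /=.
  rewrite a2y (negbTE na1y) add0n add1n ltnS; exact: sub_count.
have := IH ys a2y na1y.
have : (nat_of_bool (a1 z) <= a2 z)%N by case h: (a1 z) => //; rewrite (sub z h).
lia.
Qed.

Lemma ev_ex (u : nat -> L) (s : seq L) :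
  (forall m n, (m <= n)%N -> u m <= u n) -> (forall n, u n \in s) ->
  exists v, eventual_value u v.
Proof.
move=> mono ins.
pose c k := count (fun y => y <= u k) s.
have key : forall k n, (k <= n)%N -> u n <> u k -> (c k < c n)%N.
  move=> k n kn ne; apply: (@count_lt _ _ _ s (u n)) => //.
  - by move=> z /= h; exact: le_trans h (mono _ _ kn).
  - apply/negP => /= h; apply: ne; apply/le_anti; rewrite h mono //.
have cs : forall k, (c k <= size s)%N by move=> k; exact: count_size.
suff: forall d k, (size s - c k <= d)%N -> exists v, eventual_value u v.
  by move/(_ (size s) 0); apply; rewrite leq_subr.
elim=> [|d IH] k hd;
  case: (classic (exists n, (k <= n)%N /\ u n <> u k)) => [[n [kn ne]]|no].
- have := key k n kn ne; have := cs n; lia.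
- exists (u k), k => n kn; apply: NNPP => ne; apply: no; eauto.
- apply: (IH n); have := key k n kn ne; have := cs n; lia.
- exists (u k), k => n kn; apply: NNPP => ne; apply: no; eauto.
Qed.

Lemma join_self k1 k2 : validK k2 -> leK k1 k2 -> is_joinK k1 k2 k2.
Proof. move=> v l; split => // p; by []. Qed.

Lemma join_AB m n : validK (KCAB m n) -> is_joinK (KA m) (KB n) (KCAB m n).
Proof.
move=> v; split=> //; [by case | by case |].
move=> k vk h1 h2; have ha := h1 (ja m) (leqnn m); have hb := h2 (jb n) (leqnn n).
case: k vk h1 h2 ha hb => [||m'|n'|m' n'] //= vk _ _ ha hb.
case=> //= j; lia.
Qed.

Lemma join_BC n : is_joinK (KB n) KC (KCAB n.+1 n).
Proof.
split=> /=; [lia | by case | by case |].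
move=> k vk h1 h2; have hb := h1 (jb n) (leqnn n); have hc := h2 jc isT.
case: k vk h1 h2 hb hc => [||m'|n'|m' n'] //= vk _ _ hb hc.
case=> //= j; lia.
Qed.

Lemma join_AC n : is_joinK (KA n) KC (KCAB n n.+1).
Proof.
split=> /=; [lia | by case | by case |].
move=> k vk h1 h2; have hb := h1 (ja n) (leqnn n); have hc := h2 jc isT.
case: k vk h1 h2 hb hc => [||m'|n'|m' n'] //= vk _ _ hb hc.
case=> //= j; lia.
Qed.

Definition fx (x : JK -> L) (k : Kel) : L :=
  match k with
  | K0 => \bot
  | KC => x jc
  | KA m => x (ja m)
  | KB n => x (jb n)
  | KCAB m n => x jc `&` (x (ja m) `&` x (jb n))
  end.

Definition memO (o : option nat) j := if o is Some m then (m <= j)%N else false.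
Definition ounion (o1 o2 : option nat) :=
  match o1, o2 with
  | Some a, Some b => Some (minn a b)
  | Some a, None => Some a
  | None, o => o
  end.

Definition tri (k : Kel) : bool * option nat * option nat :=
  match k with
  | K0 => (false, None, None)
  | KC => (true, None, None)
  | KA m => (false, Some m, None)
  | KB n => (false, None, Some n)
  | KCAB m n => (true, Some m, Some n)
  end.

Definition memT (t : bool * option nat * option nat) p :=
  let: (c, ma, nb) := t in
  match p with jc => c | ja j => memO ma j | jb j => memO nb j end.

Definition tunion (t1 t2 : bool * option nat * option nat) :=
  let: (c1, a1, b1) := t1 in let: (c2, a2, b2) := t2 in
  (c1 || c2, ounion a1 a2, ounion b1 b2).

Lemma memO_union o1 o2 j : memO (ounion o1 o2) j = memO o1 j || memO o2 j.
Proof. by case: o1 o2 => [a|] [b|] //=; rewrite ?geq_min ?orbF. Qed.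

Lemma memT_union t1 t2 p : memT (tunion t1 t2) p = memT t1 p || memT t2 p.
Proof.
case: t1 t2 => [[c1 a1] b1] [[c2 a2] b2]; case: p => [|j|j] /=; by rewrite ?memO_union.
Qed.

Lemma memT_tri k p : memT (tri k) p = memK k p.
Proof. by case: k => *; case: p. Qed.

Definition cl (t : bool * option nat * option nat) : Kel :=
  let: (c, ma, nb) := t in
  match ma, nb with
  | None, None => if c then KC else K0
  | Some m, None => if c then KCAB m m.+1 else KA m
  | None, Some n => if c then KCAB n.+1 n else KB n
  | Some m, Some n => KCAB (minn m n.+1) (minn n m.+1)
  end.

Lemma cl_valid t : validK (cl t).
Proof. case: t => [[[] [m|]] [n|]] /=; lia. Qed.

Lemma cl_mem t p : memT t p -> memK (cl t) p.
Proof. case: t => [[[] [m|]] [n|]]; case: p => [|j|j] /=; lia. Qed.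

Lemma cl_le (x : JK -> L) M t :
  (forall n, x (jb n) `&` x jc <= x (ja n.+1)) ->
  (forall n, x (ja n) `&` x jc <= x (jb n.+1)) ->
  (forall m n, x (ja m) `&` x (jb n) <= x jc) ->
  (forall p, memT t p -> M <= x p) -> (exists p, memT t p) ->
  M <= fx x (cl t).
Proof.
case: t => [[c [m|]] [n|]] H1 H2 H5 Hm [p0 hp0] /=.
- have ha := Hm (ja m) (leqnn m); have hb := Hm (jb n) (leqnn n).
  have hc : M <= x jc.
    by apply: le_trans (H5 m n); rewrite lexI ha hb.
  rewrite !lexI hc /=; apply/andP; split.
    case: (leqP m n.+1) => h //.
    apply: le_trans (H1 n); by rewrite lexI hb hc.
  case: (leqP n m.+1) => h //.
  apply: le_trans (H2 m); by rewrite lexI ha hc.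
- have ha := Hm (ja m) (leqnn m).
  case: c Hm hp0 => Hm hp0 /=; last by [].
  have hc := Hm jc isT.
  rewrite !lexI hc ha /=; apply: le_trans (H2 m); by rewrite lexI ha hc.
- have hb := Hm (jb n) (leqnn n).
  case: c Hm hp0 => Hm hp0 /=; last by [].
  have hc := Hm jc isT.
  rewrite !lexI hc hb /= andbT; apply: le_trans (H1 n); by rewrite lexI hb hc.
- case: c Hm hp0 => Hm hp0 /=; first exact: Hm jc isT.
  by case: p0 hp0.
Qed.

Lemma le_f (x : JK -> L) k p : antitoneJ x -> memK k p -> fx x k <= x p.
Proof.
move=> anti.
have amon m n : (m <= n)%N -> x (ja m) <= x (ja n).
  by move=> h; apply: anti; case=> //= j; lia.
have bmon m n : (m <= n)%N -> x (jb m) <= x (jb n).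
  by move=> h; apply: anti; case=> //= j; lia.
case: k p => [||m|n|m n] [|j|j] //= h.
- exact: amon.
- exact: bmon.
- exact: leIl.
- apply: leIxr; apply: leIxl; exact: amon.
- apply: leIxr; apply: leIxr; exact: bmon.
Qed.

Lemma fle (x : JK -> L) k1 k3 : antitoneJ x -> k1 <> K0 -> leK k1 k3 ->
  fx x k3 <= fx x k1.
Proof.
move=> anti; case: k1 => [//||m|n|m n] _ l /=.
- exact: le_f (l jc isT).
- exact: le_f (l (ja m) (leqnn m)).
- exact: le_f (l (jb n) (leqnn n)).
- rewrite !lexI !le_f //; [exact: l (jb n) (leqnn n) | exact: l (ja m) (leqnn m)
    | exact: l jc isT].
Qed.

Lemma nz_mem k : k <> K0 -> exists p, memK k p.
Proof.
case: k => [//||m|n|m n] _.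
- by exists jc.
- by exists (ja m); rewrite /= leqnn.
- by exists (jb n); rewrite /= leqnn.
- by exists jc.
Qed.

Lemma fwd (x : JK -> L) : inAstar x -> extending_hom x (fx x).
Proof.
move=> [[anti fr] [ai [bi [[Na ea] [[Nb eb] e1]]]]].
have amon m n : (m <= n)%N -> x (ja m) <= x (ja n).
  by move=> h; apply: anti; case=> //= j; lia.
have bmon m n : (m <= n)%N -> x (jb m) <= x (jb n).
  by move=> h; apply: anti; case=> //= j; lia.
have ha m : x (ja m) <= ai.
  by rewrite -(ea (maxn m Na)) ?leq_maxr // amon // leq_maxl.
have hb m : x (jb m) <= bi.
  by rewrite -(eb (maxn m Nb)) ?leq_maxr // bmon // leq_maxl.
have H5 m n : x (ja m) `&` x (jb n) <= x jc.
  have e := e1 jc; simpl in e.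
  apply: le_trans (leI2 (ha m) (hb n)) _; rewrite -e; exact: leUr.
have H1 n : x (jb n) `&` x jc <= x (ja n.+1).
  have e := e1 (ja n.+1); simpl in e; rewrite -e; exact: leUr.
have H2 n : x (ja n) `&` x jc <= x (jb n.+1).
  have e := e1 (jb n.+1); simpl in e; rewrite -e; exact: leUr.
split; last by case.
move=> k1 k2 k3 v1 v2 n1 n2 [v3 l1 l2 mn].
apply/le_anti/andP; split.
  by rewrite lexI !fle.
set t := tunion (tri k1) (tri k2).
have lJ1 : leK k1 (cl t).
  by move=> p h; apply: cl_mem; rewrite memT_union !memT_tri h.
have lJ2 : leK k2 (cl t).
  by move=> p h; apply: cl_mem; rewrite memT_union !memT_tri h orbT.
have l3 := mn (cl t) (cl_valid t) lJ1 lJ2.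
have [p1 hp1] : exists p, memK k1 p by apply: nz_mem.
have n3 : k3 <> K0 by move=> e; rewrite e in l1; by have := l1 p1 hp1.
apply: (@le_trans _ _ (fx x (cl t))); last exact: fle.
apply: cl_le => //.
  move=> p; rewrite memT_union !memT_tri => /orP [h|h].
    by apply: leIxl; apply: le_f.
  by apply: leIxr; apply: le_f.
by exists p1; rewrite /t memT_union memT_tri hp1.
Qed.

Lemma bwd (x : JK -> L) (f : Kel -> L) :
  finite_range x -> extending_hom x f -> inAstar x.
Proof.
move=> fr [hom ext].
have fl k1 k2 : validK k1 -> validK k2 -> k1 <> K0 -> k2 <> K0 -> leK k1 k2 ->
    f k2 <= f k1.
  move=> v1 v2 n1 n2 l; rewrite (hom k1 k2 k2) //; [exact: leIl | exact: join_self].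
have eA n : f (KA n) = x (ja n) := ext (ja n).
have eB n : f (KB n) = x (jb n) := ext (jb n).
have eC : f KC = x jc := ext jc.
have anti : antitoneJ x.
  move=> p q l; rewrite -!ext; apply: fl => //; by [case: p l | case: q l | case: p l | case: q l].
have amon m n : (m <= n)%N -> x (ja m) <= x (ja n).
  by move=> h; apply: anti; case=> //= j; lia.
have bmon m n : (m <= n)%N -> x (jb m) <= x (jb n).
  by move=> h; apply: anti; case=> //= j; lia.
have [s hs] := fr.
have [ai [Na ea]] := ev_ex (fun n => x (ja n)) s amon (fun n => hs (ja n)).
have [bi [Nb eb]] := ev_ex (fun n => x (jb n)) s bmon (fun n => hs (jb n)).
split; first by [].
exists ai, bi; split; first by exists Na.
split; first by exists Nb.
case=> [|[|n]|[|n]] //=.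
- apply: join_l.
  pose N := maxn Na Nb.
  rewrite -(ea N) ?leq_maxl // -(eb N) ?leq_maxr //.
  have eN : f (KCAB N N) = x (ja N) `&` x (jb N).
    rewrite -eA -eB; apply: hom => //; apply: join_AB => /=; lia.
  rewrite -eN -eC; apply: fl => //=; [lia | by case].
- apply: join_l.
  have eN : f (KCAB n.+1 n) = x (jb n) `&` x jc.
    rewrite -eB -eC; apply: hom => //; apply: join_BC.
  rewrite -eN -eA.
  apply: fl => //=; [lia | case=> //= j; lia].
- apply: join_l.
  have eN : f (KCAB n n.+1) = x (ja n) `&` x jc.
    rewrite -eA -eC; apply: hom => //; apply: join_AC.
  rewrite -eN -eB.
  apply: fl => //=; [lia | case=> //= j; lia].
Qed.

Lemma uniq_ext (x : JK -> L) (f g : Kel -> L) :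
  extending_hom x f -> extending_hom x g ->
  forall k, validK k -> k <> K0 -> f k = g k.
Proof.
move=> [hf ef] [hg eg]; case=> [//||m|n|m n] v _.
- by rewrite (ef jc) (eg jc).
- by rewrite (ef (ja m)) (eg (ja m)).
- by rewrite (ef (jb n)) (eg (jb n)).
- rewrite (hf (KA m) (KB n) (KCAB m n)) ?(hg (KA m) (KB n) (KCAB m n)) //;
    try exact: join_AB.
  by rewrite (ef (ja m)) (eg (ja m)) (ef (jb n)) (eg (jb n)).
Qed.

End Helpers.

Theorem lemma5p7 (h : nat) (disp : Order.disp_t) (L : bLatticeType disp)
    (x : JK -> L) :
  (0 < h)%N -> @hmodular disp L h -> finite_range x ->
  (inAstar x <-> exists f : Kel -> L, extending_hom x f) /\
  (forall f g : Kel -> L, extending_hom x f -> extending_hom x g ->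
     forall k, validK k -> k <> K0 -> f k = g k).
Proof.
move=> _ _ fr; split; last exact: uniq_ext.
split; first by move=> hA; exists (fx x); exact: fwd.
by case=> f hf; exact: bwd hf.
Qed.
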